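(* For every integer $k\geq 3$, there exists a bridgeless cubic graph $G$ such that $\mu_3(G)=k$.
   Context: A 1-factor is a spanning 1-regular subgraph. $\mu_3(G)$ is the minimum, over all lists (with possible repetition) of three 1-factors of $G$, of the number of edges of $G$ contained in none of them. *)

(* Defs.v *)
From mathcomp Require Import all_boot.
Set Implicit Arguments. Unset Strict Implicit. Unset Printing Implicit Defensive.

(* A finite loopless multigraph: vertex type V, edge type E, and each edge
   has a set of exactly two distinct end-vertices (parallel edges allowed). *)
Definition loopless (V E : finType) (ends : E -> {set V}) : Prop :=
  forall e, #|ends e| = 2.

Definition cubic (V E : finType) (ends : E -> {set V}) : Prop :=
  forall v : V, #|[set e | v \in ends e]| = 3.

Definition adj_minus (V E : finType) (ends : E -> {set V}) (e : E) : rel V :=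
  fun x y => [exists f, (f != e) && (x \in ends f) && (y \in ends f) && (x != y)].

Definition bridgeless (V E : finType) (ends : E -> {set V}) : Prop :=
  forall (e : E) (u v : V), u \in ends e -> v \in ends e ->
    connect (adj_minus ends e) u v.

Definition one_factor (V E : finType) (ends : E -> {set V}) (M : {set E}) : Prop :=
  forall v : V, #|[set e in M | v \in ends e]| = 1.

Definition uncovered3 (E : finType) (M1 M2 M3 : {set E}) : nat :=
  #|~: (M1 :|: M2 :|: M3)|.

Definition mu3_eq (V E : finType) (ends : E -> {set V}) (k : nat) : Prop :=
  (exists M1 M2 M3 : {set E},
      [/\ one_factor ends M1, one_factor ends M2, one_factor ends M3
        & uncovered3 M1 M2 M3 = k]) /\
  (forall M1 M2 M3 : {set E},
      one_factor ends M1 -> one_factor ends M2 -> one_factor ends M3 ->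
      k <= uncovered3 M1 M2 M3).

(* Main.v *)
Require Import Defs.
From mathcomp Require Import all_boot.
From mathcomp Require Import zify.
Set Implicit Arguments. Unset Strict Implicit. Unset Printing Implicit Defensive.

Lemma card_count (T : finType) (A : {pred T}) : #|A| = count A (enum T).
Proof. by rewrite cardE -size_filter enumT /enum_mem. Qed.

Lemma card_sumset (T1 T2 : finType) (A : {pred T1 + T2}) :
  #|A| = #|[pred x | inl x \in A]| + #|[pred x | inr x \in A]|.
Proof.
rewrite !card_count [in LHS]enumT unlock /= /sum_enum -!enumT count_cat !count_map.
by [].
Qed.

Lemma connect_map (T T' : finType) (r : rel T) (r' : rel T') (f : T -> T') :
  (forall x y, r x y -> r' (f x) (f y)) -> forall x y, connect r x y -> connect r' (f x) (f y).
Proof.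
move=> H x y /connectP [p Hp ->]; elim: p x Hp => [|z p IH] x /=; first by rewrite connect0.
case/andP => Hxz Hp; exact: connect_trans (connect1 (H _ _ Hxz)) (IH _ Hp).
Qed.

Section Sum.
Variables (V1 E1 V2 E2 : finType) (ends1 : E1 -> {set V1}) (ends2 : E2 -> {set V2}).

Definition sends (e : E1 + E2) : {set V1 + V2} :=
  [set v | match e, v with
           | inl e1, inl v1 => v1 \in ends1 e1
           | inr e2, inr v2 => v2 \in ends2 e2
           | _, _ => false end].

Lemma sum_loop : loopless ends1 -> loopless ends2 -> loopless sends.
Proof.
move=> H1 H2 [e|e]; rewrite card_sumset.
- rewrite -(H1 e) -[RHS]addn0; congr (_ + _).
    by apply: eq_card => x; rewrite !inE.
  by apply: eq_card0 => x; rewrite !inE.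
- rewrite -(H2 e) -[RHS]add0n; congr (_ + _).
    by apply: eq_card0 => x; rewrite !inE.
  by apply: eq_card => x; rewrite !inE.
Qed.

Lemma sum_cub : cubic ends1 -> cubic ends2 -> cubic sends.
Proof.
move=> H1 H2 [v|v]; rewrite card_sumset.
- rewrite -(H1 v) -[RHS]addn0; congr (_ + _).
    by apply: eq_card => x; rewrite !inE.
  by apply: eq_card0 => x; rewrite !inE.
- rewrite -(H2 v) -[RHS]add0n; congr (_ + _).
    by apply: eq_card0 => x; rewrite !inE.
  by apply: eq_card => x; rewrite !inE.
Qed.

Definition Ml (M : {set E1 + E2}) : {set E1} := [set e | inl e \in M].
Definition Mr (M : {set E1 + E2}) : {set E2} := [set e | inr e \in M].
Definition Mg (M1 : {set E1}) (M2 : {set E2}) : {set E1 + E2} :=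
  [set e | match e with inl e1 => e1 \in M1 | inr e2 => e2 \in M2 end].

Lemma sum_of M : one_factor sends M <-> one_factor ends1 (Ml M) /\ one_factor ends2 (Mr M).
Proof.
have El v : #|[set e in M | inl v \in sends e]| = #|[set e in Ml M | v \in ends1 e]|.
  rewrite card_sumset -[RHS]addn0; congr (_ + _).
    by apply: eq_card => x; rewrite !inE.
  by apply: eq_card0 => x; rewrite !inE andbF.
have Er v : #|[set e in M | inr v \in sends e]| = #|[set e in Mr M | v \in ends2 e]|.
  rewrite card_sumset -[RHS]add0n; congr (_ + _).
    by apply: eq_card0 => x; rewrite !inE andbF.
  by apply: eq_card => x; rewrite !inE.
split.
  by move=> H; split => v; [rewrite -El | rewrite -Er]; apply: H.
by case=> H1 H2 [v|v]; [rewrite El | rewrite Er].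
Qed.

Lemma Ml_g M1 M2 : Ml (Mg M1 M2) = M1.
Proof. by apply/setP => e; rewrite !inE. Qed.
Lemma Mr_g M1 M2 : Mr (Mg M1 M2) = M2.
Proof. by apply/setP => e; rewrite !inE. Qed.

Lemma sum_unc M1 M2 M3 : uncovered3 M1 M2 M3 =
  uncovered3 (Ml M1) (Ml M2) (Ml M3) + uncovered3 (Mr M1) (Mr M2) (Mr M3).
Proof.
rewrite /uncovered3 card_sumset; congr (_ + _); apply: eq_card => x; by rewrite !inE.
Qed.

Lemma sum_mu k1 k2 : mu3_eq ends1 k1 -> mu3_eq ends2 k2 -> mu3_eq sends (k1 + k2).
Proof.
case=> [[A1 [A2 [A3 [HA1 HA2 HA3 UA]]]] LA] [[B1 [B2 [B3 [HB1 HB2 HB3 UB]]]] LB]; split.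
  exists (Mg A1 B1), (Mg A2 B2), (Mg A3 B3).
  split; try by apply/sum_of; rewrite Ml_g Mr_g.
  by rewrite sum_unc !Ml_g !Mr_g UA UB.
move=> M1 M2 M3 /sum_of [H1 H1'] /sum_of [H2 H2'] /sum_of [H3 H3'].
by rewrite sum_unc leq_add // ?LA ?LB.
Qed.

Lemma sum_br : bridgeless ends1 -> bridgeless ends2 -> bridgeless sends.
Proof.
move=> H1 H2 [e|e] [u|u] [v|v]; rewrite !inE // => Hu Hv.
- apply: (connect_map (f := inl) _ (H1 e u v Hu Hv)) => x y /existsP [f Hf].
  by apply/existsP; exists (inl f); rewrite !inE.
- apply: (connect_map (f := inr) _ (H2 e u v Hu Hv)) => x y /existsP [f Hf].
  by apply/existsP; exists (inr f); rewrite !inE.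
Qed.
End Sum.

Lemma card_ordQ k (Q : nat -> bool) : #|[set i : 'I_k | Q i]| = count Q (iota 0 k).
Proof.
have -> : count Q (iota 0 k) = count (fun i : 'I_k => Q i) (enum 'I_k) by rewrite -val_enum_ord count_map.
rewrite cardsE cardE -size_filter enumT /enum_mem. by [].
Qed.

Lemma in_iota0 k (i : 'I_k) : val i \in iota 0 k.
Proof. by rewrite mem_iota ltn_ord. Qed.

Fixpoint unc3 (a b c : seq bool) : nat :=
  match a, b, c with
  | x :: a', y :: b', z :: c' => (~~ (x || y || z)) + unc3 a' b' c'
  | _, _, _ => 0
  end.

Lemma unc3_map (T : Type) (f1 f2 f3 : T -> bool) (l : seq T) :
  unc3 (map f1 l) (map f2 l) (map f3 l) = count (fun i => ~~ (f1 i || f2 i || f3 i)) l.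
Proof. by elim: l => //= x l ->. Qed.

Section Table.
Variables (n m : nat) (s d : seq nat).
Definition inc (i v : nat) : bool := (nth 0 s i == v) || (nth 0 d i == v).
Definition tends (e : 'I_m) : {set 'I_n} := [set v : 'I_n | inc e v].

Definition C_loop := all (fun i => count (inc i) (iota 0 n) == 2) (iota 0 m).
Lemma tloop : C_loop -> loopless tends.
Proof. move=> /allP H e; rewrite /tends (card_ordQ n (inc e)). apply/eqP/H; by rewrite in_iota0. Qed.

Definition C_cub := all (fun v => count (fun i => inc i v) (iota 0 m) == 3) (iota 0 n).
Lemma tcub : C_cub -> cubic tends.
Proof.
move=> /allP H v.
have -> : [set e | v \in tends e] = [set e : 'I_m | (fun i => inc i v) e].
  by apply/setP => e; rewrite !inE.
by rewrite (card_ordQ m (fun i => inc i v)); apply/eqP/H; rewrite in_iota0.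
Qed.

Definition bits (M : {set 'I_m}) : seq bool := [seq i \in M | i <- enum 'I_m].
Definition setb (x : seq bool) : {set 'I_m} := [set i : 'I_m | nth false x i].

Lemma nth_bits M (i : 'I_m) : nth false (bits M) i = (i \in M).
Proof. by rewrite /bits (nth_map i) ?size_enum_ord ?ltn_ord // nth_ord_enum. Qed.

Lemma size_bits M : size (bits M) = m.
Proof. by rewrite size_map size_enum_ord. Qed.

Lemma bits_setb x : size x = m -> bits (setb x) = x.
Proof.
move=> Hx; apply: (@eq_from_nth _ false); first by rewrite size_bits.
move=> j; rewrite size_bits => Hj.
by rewrite (nth_bits _ (Ordinal Hj)) inE.
Qed.

Definition PMb (x : seq bool) :=
  all (fun v => count (fun i => nth false x i && inc i v) (iota 0 m) == 1) (iota 0 n).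

Lemma one_factorP M : one_factor tends M <-> PMb (bits M).
Proof.
have E v : [set e in M | v \in tends e] =
    [set e : 'I_m | (fun i => nth false (bits M) i && inc i v) e].
  by apply/setP => e; rewrite !inE nth_bits.
split.
  move=> H; apply/allP => v; rewrite mem_iota /= add0n => Hv.
  by have := H (Ordinal Hv); rewrite E (card_ordQ m (fun i => nth false (bits M) i && inc i v)) => ->.
move=> /allP H v; rewrite E (card_ordQ m (fun i => nth false (bits M) i && inc i v)); apply/eqP/H; exact: in_iota0.
Qed.

Lemma unc_bits M1 M2 M3 : uncovered3 M1 M2 M3 = unc3 (bits M1) (bits M2) (bits M3).
Proof.
rewrite /uncovered3 /bits unc3_map card_count; apply: eq_count => i.
by rewrite -[LHS]/(i \in ~: (M1 :|: M2 :|: M3)) !inE.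
Qed.

Definition ILst := [seq [seq i <- iota 0 m | inc i v] | v <- iota 0 n].
Definition cnt' (l : seq nat) (y : seq bool) := count (fun i => (i < size y) && nth false y i) l.
Definition okb (IL : seq (seq nat)) (y : seq bool) :=
  all (fun l => (cnt' l y <= 1) && (all (fun i => i < size y) l ==> (cnt' l y == 1))) IL.
Definition step IL (S : seq (seq bool)) :=
  [seq z <- [seq rcons y b | y <- S, b <- [:: true; false]] | okb IL z].
Definition enumPM := let IL := ILst in iter m (step IL) [:: [::]].

Lemma okb_take x j : size x = m -> PMb x -> j <= m -> okb ILst (take j x).
Proof.
move=> Hs /allP H Hj; apply/allP => l /mapP [v Hv ->].
have /eqP Hc := H v Hv.
have Hsz : size (take j x) = j by rewrite size_takel // Hs.
have Ec : cnt' [seq i <- iota 0 m | inc i v] (take j x) =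
    count (fun i => ((i < j) && nth false x i) && inc i v) (iota 0 m).
  rewrite /cnt' count_filter Hsz; apply: eq_count => i.
  rewrite /= /predI /=; have [Hij|Hij] := ltnP i j; last by []. by rewrite (nth_take _ Hij).
rewrite Hsz Ec; apply/andP; split.
  rewrite -Hc; apply: sub_count => i /andP [/andP [_ ->] ->] //.
apply/implyP => /allP Hall; rewrite -Hc; apply/eqP; apply: eq_in_count => i Hi.
case Hinc: (inc i v); rewrite ?andbF ?andbT //.
by rewrite Hall ?mem_filter ?Hinc.
Qed.

Lemma enum_complete x : size x = m -> PMb x -> x \in enumPM.
Proof.
move=> Hs Hp.
suff: forall j, j <= m -> take j x \in iter j (step ILst) [:: [::]].
  by move=> /(_ m (leqnn m)); rewrite -Hs take_size Hs.
rewrite /enumPM; elim=> [|j IH] Hj; first by rewrite take0 /= inE.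
rewrite /= /step mem_filter okb_take // andTb.
rewrite (take_nth false); last by rewrite Hs.
have Hb : nth false x j \in [:: true; false] by case: (nth false x j).
exact: (allpairs_f rcons (IH (ltnW Hj)) Hb).
Qed.

Lemma one_factor_enum M : one_factor tends M -> bits M \in enumPM.
Proof. by move=> /one_factorP H; apply: enum_complete; rewrite ?size_bits. Qed.

Definition C_mu k w1 w2 w3 :=
  [&& PMb w1, PMb w2, PMb w3 & [&& size w1 == m, size w2 == m, size w3 == m,
      unc3 w1 w2 w3 == k &
      let L := enumPM in all (fun a => all (fun b => all (fun c => k <= unc3 a b c) L) L) L]].

Lemma tmu k w1 w2 w3 : C_mu k w1 w2 w3 -> mu3_eq tends k.
Proof.
case/and4P => P1 P2 P3 /and5P [/eqP S1 /eqP S2 /eqP S3 /eqP U /allP A]; split.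
  exists (setb w1), (setb w2), (setb w3).
  split; try by apply/one_factorP; rewrite bits_setb.
  by rewrite unc_bits !bits_setb.
move=> M1 M2 M3 /one_factor_enum H1 /one_factor_enum H2 /one_factor_enum H3.
rewrite unc_bits.
by have /allP /(_ _ H2) /allP /(_ _ H3) := A _ H1.
Qed.

Definition nb1 e x j : seq nat :=
  if j != e then (if nth 0 s j == x then [:: nth 0 d j] else [::]) ++
                 (if nth 0 d j == x then [:: nth 0 s j] else [::])
  else [::].
Definition nbrs e x :=
  [seq y <- flatten [seq nb1 e x j | j <- iota 0 m] | (y != x) && (y < n)].
Lemma nb1P e x j y : y \in nb1 e x j -> (j != e) && inc j x && inc j y.
Proof.
have : y \in nb1 e x j -> (j != e) &&
   (((nth 0 s j == x) && (y == nth 0 d j)) || ((nth 0 d j == x) && (y == nth 0 s j))).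
  rewrite /nb1; case: (j != e) => //=; rewrite mem_cat.
  by case: (nth 0 s j == x); case: (nth 0 d j == x); rewrite /= ?inE ?orbF ?andbT.
move=> H /H /andP [-> /orP [] /andP [/eqP Hs /eqP Hy]];
  by rewrite /inc -Hs Hy !eqxx /= ?orbT.
Qed.

Fixpoint reach e u t : seq nat :=
  match t with
  | 0 => [:: u]
  | t'.+1 => let R := reach e u t' in undup (R ++ flatten (map (nbrs e) R))
  end.

Lemma reach_sound (e : 'I_m) (u0 : 'I_n) t y : y \in reach e u0 t ->
  exists z : 'I_n, val z = y /\ connect (adj_minus tends e) u0 z.
Proof.
elim: t y => [|t IH] y /=.
  by rewrite inE => /eqP ->; exists u0; split; rewrite ?connect0.
rewrite mem_undup mem_cat => /orP [/IH //|/flattenP [l /mapP [x' Hx' ->] Hy]].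
have [z' [Ez' Cz']] := IH _ Hx'.
move: Hy; rewrite mem_filter => /andP [/andP [Hxy Hyn] /flattenP [l' /mapP [j Hj ->] Hy]].
have Hjx : (j != e) && inc j x' && inc j y by apply: nb1P Hy.
case/andP: Hjx => /andP [Hje Hjx] Hjy.
exists (Ordinal Hyn); split => //.
apply: (connect_trans Cz'); apply: connect1.
move: Hj; rewrite mem_iota /= add0n => Hjm.
apply/existsP; exists (Ordinal Hjm).
by rewrite !inE /= Ez' Hjx Hjy Hje -(inj_eq val_inj) /= Ez' eq_sym.
Qed.

Definition C_br :=
  all (fun e => (nth 0 d e \in reach e (nth 0 s e) n) && (nth 0 s e \in reach e (nth 0 d e) n))
      (iota 0 m).

Lemma tbr : C_br -> bridgeless tends.
Proof.
move=> /allP H e u v; rewrite !inE => Hu Hv.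
have /andP [H1 H2] := H e (in_iota0 e).
have Hw : forall a b : 'I_n, val b \in reach e (val a) n -> connect (adj_minus tends e) a b.
  move=> a b /reach_sound [z [Ez Cz]].
  by have -> : b = z by apply: val_inj.
case: (eqVneq u v) => [->|Huv]; first exact: connect0.
rewrite /inc in Hu Hv.
case/orP: Hu => /eqP Hu; case/orP: Hv => /eqP Hv.
- by move: Huv; rewrite -(inj_eq val_inj) /= -Hu -Hv eqxx.
- by apply: Hw; move: H1; rewrite Hu Hv; exact: id.
- by apply: Hw; move: H2; rewrite Hu Hv; exact: id.
- by move: Huv; rewrite -(inj_eq val_inj) /= -Hu -Hv eqxx.
Qed.
End Table.


Record G := mkG { GV : finType; GE : finType; Gends : GE -> {set GV} }.
Arguments Gends : clear implicits.
Definition good (g : G) k :=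
  [/\ loopless (Gends g), cubic (Gends g), bridgeless (Gends g) & mu3_eq (Gends g) k].
Definition sumG g h := mkG (sends (Gends g) (Gends h)).
Fixpoint rep q g0 g := match q with 0 => g0 | q'.+1 => sumG g (rep q' g0 g) end.

Lemma sum_good g h k1 k2 : good g k1 -> good h k2 -> good (sumG g h) (k1 + k2).
Proof.
case=> [A1 B1 C1 D1] [A2 B2 C2 D2]; split.
- exact: sum_loop.
- exact: sum_cub.
- exact: sum_br.
- exact: sum_mu.
Qed.

Lemma rep_good q g0 g k0 k : good g0 k0 -> good g k -> good (rep q g0 g) (q * k + k0).
Proof.
move=> H0 H; elim: q => [|q IH] /=; first by rewrite mul0n add0n.
by rewrite mulSn -addnA; apply: sum_good.
Qed.

Definition sP := [:: 0; 1; 2; 3; 4; 0; 1; 2; 3; 4; 5; 6; 7; 8; 9].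
Definition dP := [:: 1; 2; 3; 4; 0; 5; 6; 7; 8; 9; 7; 8; 9; 5; 6].
Definition wP0 := [:: true; false; true; false; false; false; false; false; false; true; true; true; false; false; false].
Definition wP1 := [:: true; false; false; true; false; false; false; true; false; false; false; false; false; true; true].
Definition wP2 := [:: false; true; false; true; false; true; false; false; false; false; false; true; true; false; false].
Lemma goodP : good (mkG (@tends 10 15 sP dP)) 3.
Proof.
split.
- apply: tloop; vm_compute; exact isT.
- apply: tcub; vm_compute; exact isT.
- apply: tbr; vm_compute; exact isT.
- apply: (@tmu _ _ _ _ _ wP0 wP1 wP2); vm_compute; exact isT.
Qed.

Definition sG4 := [:: 0; 1; 2; 3; 4; 0; 1; 2; 3; 4; 5; 6; 7; 8; 9; 10; 10; 11; 12; 12; 13; 14; 14; 15].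
Definition dG4 := [:: 10; 2; 12; 4; 0; 5; 6; 7; 8; 9; 7; 8; 9; 14; 6; 11; 11; 1; 13; 13; 3; 15; 15; 5].
Definition wG40 := [:: true; false; true; false; false; false; false; false; false; true; true; true; false; false; false; false; false; true; false; false; true; true; false; false].
Definition wG41 := [:: true; false; false; true; false; false; false; true; false; false; false; false; false; true; true; false; false; true; true; false; false; false; false; true].
Definition wG42 := [:: false; true; false; true; false; true; false; false; false; false; false; true; true; false; false; true; false; false; false; true; false; false; true; false].
Lemma goodG4 : good (mkG (@tends 16 24 sG4 dG4)) 4.
Proof.
split.
- apply: tloop; vm_compute; exact isT.
- apply: tcub; vm_compute; exact isT.
- apply: tbr; vm_compute; exact isT.
- apply: (@tmu _ _ _ _ _ wG40 wG41 wG42); vm_compute; exact isT.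
Qed.

Definition sG5 := [:: 0; 1; 2; 3; 4; 0; 1; 2; 3; 4; 5; 6; 7; 8; 9; 10; 10; 11; 12; 12; 13; 14; 14; 15; 16; 16; 17; 18; 18; 19].
Definition dG5 := [:: 10; 2; 12; 4; 0; 5; 6; 7; 8; 14; 16; 18; 9; 5; 6; 11; 11; 1; 13; 13; 3; 15; 15; 9; 17; 17; 7; 19; 19; 8].
Definition wG50 := [:: true; false; true; false; false; false; false; false; false; true; true; true; false; false; false; false; false; true; false; false; true; false; false; true; false; false; true; false; false; true].
Definition wG51 := [:: true; false; false; true; false; false; false; true; false; false; false; false; false; true; true; false; false; true; true; false; false; true; false; false; true; false; false; true; false; false].
Definition wG52 := [:: false; true; false; true; false; true; false; false; false; false; false; true; true; false; false; true; false; false; false; true; false; false; true; false; false; true; false; false; false; true].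
Lemma goodG5 : good (mkG (@tends 20 30 sG5 dG5)) 5.
Proof.
split.
- apply: tloop; vm_compute; exact isT.
- apply: tcub; vm_compute; exact isT.
- apply: tbr; vm_compute; exact isT.
- apply: (@tmu _ _ _ _ _ wG50 wG51 wG52); vm_compute; exact isT.
Qed.


Theorem mainTheorem8 :
  forall k : nat, 3 <= k ->
  exists (V E : finType) (ends : E -> {set V}),
    [/\ loopless ends, cubic ends, bridgeless ends & mu3_eq ends k].
Proof.
move=> k Hk.
suff [g Hg] : exists g, good g k.
  by exists (GV g), (GE g), (Gends g).
have Ek := divn_eq (k - 3) 3.
have Hr := ltn_mod (k - 3) 3.
set q := (k - 3) %/ 3 in Ek.
move: Ek Hr; case: ((k - 3) %% 3) => [|[|[|r]]] Ek Hr //.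
- exists (rep q (mkG (@tends 10 15 sP dP)) (mkG (@tends 10 15 sP dP))).
  have -> : k = q * 3 + 3 by lia.
  exact: rep_good goodP goodP.
- exists (rep q (mkG (@tends 16 24 sG4 dG4)) (mkG (@tends 10 15 sP dP))).
  have -> : k = q * 3 + 4 by lia.
  exact: rep_good goodG4 goodP.
- exists (rep q (mkG (@tends 20 30 sG5 dG5)) (mkG (@tends 10 15 sP dP))).
  have -> : k = q * 3 + 5 by lia.
  exact: rep_good goodG5 goodP.
Qed.
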